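(* Let $T$ be a regular $n$-tournament with adjacency matrix $A$. Then for every $i\in[n]$, \[ P_A(z)=\tfrac12\left(z-\tfrac{n-1}{2}\right)\Big[(n+2z+1)\,P_{A_i}(z)+(n-2z-1)\,P_{A_i}(-z-1)\Big]. \]
   Context: An $n$-tournament is a digraph on $n$ vertices in which every pair of distinct vertices is joined by exactly one arc; its adjacency matrix $A=(a_{ij})$ has $a_{ij}=1$ if $v_i$ dominates $v_j$ and $0$ otherwise. A tournament is regular if all vertices have the same out-degree. $P_M(z)=\det(zI-M)$. $[n]=\{1,\dots,n\}$, and $A_i$ denotes the principal submatrix of $A$ obtained by deleting row and column $i$. *)

(* Defs.v *)
From mathcomp Require Import all_boot all_order all_algebra.
Set Implicit Arguments. Unset Strict Implicit. Unset Printing Implicit Defensive.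
Import GRing.Theory Num.Theory.
Local Open Scope ring_scope.

Definition is_tournament_adj (R : ringType) (n : nat) (A : 'M[R]_n) : Prop :=
  (forall i j, A i j = 0 \/ A i j = 1) /\
  (forall i, A i i = 0) /\
  (forall i j, i != j -> A i j + A j i = 1).

Definition is_regular_adj (R : ringType) (n : nat) (A : 'M[R]_n) : Prop :=
  forall i j, \sum_(k < n) A i k = \sum_(k < n) A j k.

Definition principal_minor (R : ringType) (m : nat) (A : 'M[R]_m.+1) (i : 'I_m.+1)
  : 'M[R]_m := row' i (col' i A).

(* Main.v *)
Require Import Defs.
From mathcomp Require Import all_boot all_order all_algebra ring.
From mathcomp Require Import fingroup perm.
Set Implicit Arguments. Unset Strict Implicit. Unset Printing Implicit Defensive.
Import GRing.Theory Num.Theory.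
Local Open Scope ring_scope.
Lemma schur1 (S : idomainType) m (x : S) (u : 'rV[S]_m) (v : 'cV[S]_m) (N : 'M[S]_m) :
  \det N != 0 ->
  \det (block_mx x%:M u v N) = x * \det N - (u *m \adj N *m v) 0 0.
Proof.
move=> dN.
pose K := block_mx (\det N)%:M 0 (- (\adj N *m v)) (1%:M : 'M[S]_m).
have dK : \det K = \det N.
  rewrite det_lblock det1 mulr1. by rewrite det_scalar1.
have E : block_mx x%:M u v N *m K
   = block_mx ((x * \det N)%:M - u *m \adj N *m v) u 0 N.
  rewrite mulmx_block !mulmx0 !mulmx1 !add0r !mulmxN !mulmxA mul_mx_adj !mul_mx_scalar mul_scalar_mx subrr scale_scalar_mx mulrC.
  done.
have := congr1 determinant E.
rewrite det_mulmx dK det_ublock => /mulIf -> //.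
by rewrite det_mx11 !mxE eqxx mulr1n.
Qed.

Lemma schur2 (S : comRingType) m (u : 'rV[S]_m) (v : 'cV[S]_m) (N : 'M[S]_m) :
  \det (block_mx 1%:M u v N) = \det (N - v *m u).
Proof.
pose K := block_mx (1%:M : 'M[S]_1) 0 (- v) (1%:M : 'M[S]_m).
have dK : \det K = 1 by rewrite det_lblock !det1 mulr1.
have E : K *m block_mx 1%:M u v N = block_mx 1%:M u 0 (N - v *m u).
  by rewrite mulmx_block !mul0mx !mul1mx !addr0 mulNmx mulmx1 addNr addrC mulNmx.
have := congr1 determinant E.
by rewrite det_mulmx dK mul1r det_ublock det1 mul1r.
Qed.

Lemma reg_facts (R : numFieldType) m (A : 'M[R]_m.+1) :
  is_tournament_adj A -> is_regular_adj A ->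
  exists c : nat, [/\ m = c.*2, (forall p, \sum_k A p k = c%:R)
                     & (forall q, \sum_k A k q = c%:R)].
Proof.
move=> [h01 [hd hoff]] hreg.
pose c := (\sum_(k < m.+1) nat_of_bool (A ord0 k == 1%R))%N.
have rowc : forall p, \sum_k A p k = c%:R.
  move=> p; rewrite (hreg p ord0) /c natr_sum; apply: eq_bigr => k _.
  by case: (h01 ord0 k) => ->; rewrite ?eqxx // eq_sym oner_eq0.
have sym : forall p k, A p k + A k p = 1 - (p == k)%:R.
  move=> p k; case: eqVneq => [->|ne]; first by rewrite hd addr0 subrr.
  by rewrite hoff // subr0.
have colc : forall q, \sum_k A k q = m%:R - c%:R.
  move=> q; transitivity (\sum_k (1 - (k == q)%:R - A q k)).
    by apply: eq_bigr => k _; rewrite -sym addrK.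
  rewrite !sumrB rowc sumr_const card_ord (bigD1 q) //= eqxx big1 => [|k /negPf -> //].
  by rewrite addr0 -[m.+1]addn1 natrD addrK.
have e : (m.+1)%:R * c%:R = (m.+1)%:R * (m%:R - c%:R) :> R.
  transitivity (\sum_(p < m.+1) \sum_(k < m.+1) A p k).
    by rewrite (eq_bigr _ (fun p _ => rowc p)) sumr_const card_ord mulr_natl.
  by rewrite exchange_big (eq_bigr _ (fun p _ => colc p)) sumr_const card_ord mulr_natl.
have n0 : (m.+1)%:R != 0 :> R by rewrite pnatr_eq0.
move/(mulfI n0): e => e.
have hm : m = c.*2.
  apply/eqP; rewrite -(eqr_nat R) -addnn natrD; apply/eqP.
  by rewrite {2}e addrC subrK.
exists c; split => // q; rewrite colc hm -addnn natrD addrK //.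
Qed.


Lemma key_lemma (S : comRingType) m (N : 'M[S]_m) (oT : 'rV_m) (o : 'cV_m) (w : S) :
 (oT *m N - w *: oT) *m \adj N *m (N *m o - w *: o) = \det N *: (oT *m N *m o)
   - ((w * \det N) *: (oT *m o)) *+ 2 + w^+2 *: (oT *m \adj N *m o).
Proof.
have h1 : (oT *m N - w *: oT) *m \adj N = \det N *: oT - w *: (oT *m \adj N).
  by rewrite mulmxBl -mulmxA mul_mx_adj mul_mx_scalar -scalemxAl.
have h2 : oT *m \adj N *m N = \det N *: oT by rewrite -mulmxA mul_adj_mx mul_mx_scalar.
rewrite h1 mulmxBl !mulmxBr -!scalemxAl !mulmxA h2 -!scalemxAl -!scalemxAr !scalerA.
rewrite (mulrC (\det N) w) -expr2 opprB mulr2n opprD !addrA.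
by rewrite addrAC.
Qed.

Lemma entN (S : comRingType) n (M : 'M[S]_n) i j : (- M) i j = - M i j.
Proof. by rewrite mxE. Qed.

Lemma ent (S : comRingType) (X1 X2 X3 : 'M[S]_1) (p q r : S) :
  (p *: X1 - (q *: X2) *+ 2 + r *: X3) 0 0 = p * X1 0 0 - (q * X2 0 0) *+ 2 + r * X3 0 0.
Proof. by rewrite !mulr2n !mxE. Qed.

Lemma main0 (R : numFieldType) m (A : 'M[R]_m.+1) (c : nat)
  (hT : is_tournament_adj A) (hm : m = c.*2)
  (hrow : forall p, \sum_k A p k = c%:R) (hcol : forall q, \sum_k A k q = c%:R) :
  let Ai := principal_minor A ord0 in
  let P := char_poly Ai in
  let Q := char_poly (- (1%:M + Ai)) in
  let w : {poly R} := 'X - c%:R in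
  char_poly A = 'X * P - (P * ('X * m%:R - (m * c)%:R + c%:R)
       - (w * P * m%:R) *+ 2 + w^+2 * (Q - P)).
Proof.
move=> Ai P Q w; case: hT => [h01 [hd hoff]].
pose a : 'cV[R]_m := \col_j A (lift ord0 j) ord0.
pose b : 'rV[R]_m := \row_j A ord0 (lift ord0 j).
pose N := char_poly_mx Ai.
have Aie : forall p q, Ai p q = A (lift ord0 p) (lift ord0 q) by move=> p q; rewrite !mxE.
have blk : char_poly_mx A = block_mx ('X%:M : 'M_1) (- map_mx polyC b) (- map_mx polyC a) N :> 'M_(1 + m).
  have ls : forall p : 'I_1, lshift m p = ord0.
    by move=> p; apply: val_inj; rewrite /= (ord1 p).
  have rs : forall q : 'I_m, rshift 1 q = lift ord0 q by move=> q; apply: val_inj.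
  rewrite -[char_poly_mx A](@submxK _ 1 m 1 m); congr block_mx; apply/matrixP => p q; rewrite !mxE.
  - by rewrite !ls (ord1 p) (ord1 q) eqxx hd polyC0 subr0.
  - by rewrite ls rs (negPf (neq_lift _ _)) sub0r.
  - by rewrite ls rs eq_sym (negPf (neq_lift _ _)) sub0r.
  - by rewrite !rs (inj_eq lift_inj) ?Aie.
have dN : \det N != 0 := monic_neq0 (char_poly_monic Ai).
have e1 : char_poly A = 'X * P - (map_mx polyC b *m \adj N *m map_mx polyC a) 0 0.
  by rewrite /char_poly blk schur1 // !mulNmx !mulmxN opprK.
pose o : 'cV[{poly R}]_m := const_mx 1.
pose oT : 'rV[{poly R}]_m := const_mx 1.
have sAi : forall p, \sum_j Ai p j = \sum_j A (lift ord0 p) (lift ord0 j).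
  by move=> p; apply: eq_bigr => j _; rewrite Aie.
have sAi' : forall p, \sum_j Ai j p = \sum_j A (lift ord0 j) (lift ord0 p).
  by move=> p; apply: eq_bigr => j _; rewrite Aie.
have ra : forall p, A (lift ord0 p) ord0 = c%:R - \sum_j Ai p j.
  by move=> p; rewrite -(hrow (lift ord0 p)) big_ord_recl sAi addrK.
have rb : forall p, A ord0 (lift ord0 p) = c%:R - \sum_j Ai j p.
  by move=> p; rewrite -(hcol (lift ord0 p)) big_ord_recl sAi' addrK.
have No : N *m o = 'X *: o - map_mx polyC Ai *m o by rewrite mulmxBl mul_scalar_mx.
have oN : oT *m N = 'X *: oT - oT *m map_mx polyC Ai by rewrite mulmxBr mul_mx_scalar.
have ea : map_mx polyC a = N *m o - w *: o.
  rewrite No /w scalerBl; apply/matrixP => p q; rewrite !mxE.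
  rewrite (eq_bigr (fun j => (Ai p j)%:P)) => [|j _]; last by rewrite !mxE mulr1.
  rewrite ra rmorphB /= rmorph_sum /= polyC_natr; ring.
have eb : map_mx polyC b = oT *m N - w *: oT.
  rewrite oN /w scalerBl; apply/matrixP => p q; rewrite !mxE.
  rewrite (eq_bigr (fun j => (Ai j q)%:P)) => [|j _]; last by rewrite !mxE mul1r.
  rewrite rb rmorphB /= rmorph_sum /= polyC_natr; ring.
have key := key_lemma N oT o w.
rewrite -ea -eb in key.
rewrite e1 key ent.
have eX2 : (oT *m o) 0 0 = m%:R.
  by rewrite !mxE (eq_bigr (fun _ => 1)) => [|j _]; rewrite ?sumr_const ?card_ord ?mxE ?mulr1.
have sa : \sum_j A (lift ord0 j) ord0 = c%:R.
  by rewrite -(hcol ord0) big_ord_recl hd add0r.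
have eX1 : (oT *m N *m o) 0 0 = c%:R + w * m%:R.
  rewrite -mulmxA -[N *m o](subrK (w *: o)) -ea mulmxDr -scalemxAr mxE [X in _ + X]mxE eX2.
  congr (_ + _); rewrite -polyC_natr -sa rmorph_sum mxE; apply: eq_bigr => j _.
  by rewrite !mxE mul1r.
have symAi : forall p q, Ai p q + Ai q p = 1 - (p == q)%:R.
  move=> p q; rewrite !Aie; case: (eqVneq p q) => [->|ne].
    by rewrite hd addr0 subrr.
  by rewrite hoff ?subr0 // (inj_eq lift_inj).
have eT : Q = P + (oT *m \adj N *m o) 0 0.
  have := schur1 (1 : {poly R}) (- oT) o dN.
  rewrite schur2 mul1r !mulNmx entN opprK mulmxN opprK => <-.
  rewrite /Q /char_poly -det_tr; congr (\det _); apply/matrixP => p q; rewrite !mxE big_ord1 !mxE.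
  rewrite -!Aie (eq_sym q p).
  have -> : Ai q p = 1 - (p == q)%:R - Ai p q by rewrite -(symAi p q) [Ai p q + _]addrC addrK.
  rewrite !rmorphN !rmorphD /= !rmorphN rmorphMn rmorph1 /=; ring.
rewrite eX1 eX2 eT /w natrM; change (\det N) with P; ring.
Qed.
Unset Implicit Arguments.
Theorem lemma4p2 (R : numFieldType) (m : nat) (A : 'M[R]_m.+1)
  (hT : is_tournament_adj A) (hreg : is_regular_adj A) (i : 'I_m.+1) :
  let n : R := m.+1%:R in
  let Pi := char_poly (principal_minor A i) in
  char_poly A =
    (2%:R)^-1%:P * ('X - ((n - 1) / 2%:R)%:P) *
      ((n%:P + 2%:R *: 'X + 1) * Pi
       + (n%:P - 2%:R *: 'X - 1) * (Pi \Po (- 'X - 1))).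
Proof.
move=> n Pi.
have [c [hm hrow hcol]] := reg_facts hT hreg.
have [h01 [hd hoff]] := hT.
pose s := lift_perm ord0 i 1.
pose A' := \matrix_(p, q) A (s p) (s q).
have tA' : is_tournament_adj A'.
  split; [|split] => [p q|p|p q ne]; rewrite ?mxE //.
  by rewrite hoff // (inj_eq perm_inj).
have rA' : forall p, \sum_k A' p k = c%:R.
  move=> p; rewrite -(hrow (s p)) [RHS](reindex_inj (@perm_inj _ s)) /=.
  by apply: eq_bigr => k _; rewrite mxE.
have cA' : forall q, \sum_k A' k q = c%:R.
  move=> q; rewrite -(hcol (s q)) [RHS](reindex_inj (@perm_inj _ s)) /=.
  by apply: eq_bigr => k _; rewrite mxE.
have pm : principal_minor A' ord0 = principal_minor A i.
  apply/matrixP => p q; rewrite !mxE /s !lift_perm_lift !perm1 //.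
have cpA : char_poly A' = char_poly A.
  rewrite /char_poly.
  have -> : char_poly_mx A' = row_perm s (col_perm s (char_poly_mx A)).
    by apply/matrixP => p q; rewrite !mxE (inj_eq perm_inj).
  rewrite row_permE col_permE !det_mulmx !det_perm odd_permV.
  by rewrite mulrCA -exprD -signr_odd oddD addbb expr0 mulr1.
have e := main0 tA' hm rA' cA'.
rewrite /= pm cpA in e.
set Ai := principal_minor A i in e *.
have eQ : Pi \Po (- 'X - 1) = char_poly (- (1%:M + Ai)).
  rewrite /Pi /char_poly -(det_map_mx (comp_poly (- 'X - 1))).
  have -> : (char_poly_mx (principal_minor A i) ^ comp_poly (- 'X - 1))%sesqui
      = (-1) *: char_poly_mx (- (1%:M + Ai)).
    apply/matrixP => p q; rewrite !mxE comp_polyB comp_polyC raddfMn /= comp_polyX.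
    rewrite !rmorphN !rmorphD /= rmorphMn rmorph1 /=; ring.
  have m1 : (-1) ^+ m = 1 :> {poly R} by rewrite -signr_odd hm odd_double.
  by rewrite detZ m1 mul1r.
have hn : (n - 1) / 2%:R = c%:R :> R.
  by rewrite /n -addn1 natrD addrK hm -mul2n natrM [2%:R * _]mulrC mulfK ?pnatr_eq0.
have h2 : forall p : {poly R}, 2%:R * ((2^-1)%:P * p) = p.
  by move=> p; rewrite mulrA -polyC_natr -polyCM mulfV ?pnatr_eq0 // mul1r.
have two0 : (2%:R : {poly R}) != 0 by rewrite -polyC_natr polyC_eq0 pnatr_eq0.
have hmR : (m%:R : {poly R}) = 2%:R * c%:R by rewrite hm -mul2n natrM.
have hnR : (n%:P : {poly R}) = 2%:R * c%:R + 1 by rewrite /n polyC_natr -addn1 natrD hmR.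


rewrite eQ e hn hnR polyC_natr -!mul_polyC polyC_natr natrM hmR -/Pi.
apply: (mulfI two0); rewrite -[in RHS]mulrA h2; ring.

Qed.
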